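(* Let $(X,E,\ell)$ be a weighted tree, with its path metric. Then $X$ is of negative type, its weight $w\colon X\to\mathbb{R}$ (the unique solution of $\sum_{y\in X}e^{-d(x,y)}w(y)=1$ for all $x\in X$) is $$w(x)=\sum_{e\ni x}\frac{1}{1+e^{-\ell(e)}}-(\deg x-1),\qquad x\in X,$$ and its magnitude is $$|X|=\sum_{x\in X}w(x)=1+\sum_{e\in E}\tanh\Big(\frac{\ell(e)}{2}\Big).$$
   Context: A weighted tree is a triple $(X,E,\ell)$ where $(X,E)$ is a finite simple undirected graph that is a tree (connected, no cycles), and $\ell\colon E\to(0,\infty)$ assigns a length to each edge. It is a metric space on the vertex set $X$ with $d(x,y)$ the sum of the lengths of the edges along the unique simple path from $x$ to $y$. $\deg x$ is the number of neighbours of $x$; the sum $\sum_{e\ni x}$ ranges over edges containing $x$. A metric space is of negative type if $(X,\sqrt d)$ embeds isometrically into a Hilbert space. *)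

(* Defs.v *)
From HB Require Import structures.
From mathcomp Require Import all_boot all_order all_algebra.
From mathcomp Require Import reals sequences exp.
Set Implicit Arguments. Unset Strict Implicit. Unset Printing Implicit Defensive.
Import Order.TTheory GRing.Theory Num.Theory.
Local Open Scope ring_scope.

Definition simple_graph (T : finType) (adj : rel T) : Prop :=
  (forall x, ~~ adj x x) /\ (forall x y, adj x y = adj y x).

Definition simple_path (T : finType) (adj : rel T) (x : T) (p : seq T) (y : T) : bool :=
  [&& path adj x p, last x p == y & uniq (x :: p)].

(* connected graphs (hence trees) are nonempty by convention *)
Definition connected_graph (T : finType) (adj : rel T) : Prop :=
  (0 < #|T|)%N /\ forall x y, exists p, simple_path adj x p y.

Definition acyclic_graph (T : finType) (adj : rel T) : Prop :=
  ~ exists c : seq T, [&& (3 <= size c)%N, uniq c & cycle adj c].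

Definition is_tree (T : finType) (adj : rel T) : Prop :=
  simple_graph adj /\ connected_graph adj /\ acyclic_graph adj.

Definition edges (T : finType) (adj : rel T) : {set {set T}} :=
  [set [set x; y] | x in T, y in T & adj x y].

Definition deg (T : finType) (adj : rel T) (x : T) : nat := #|[set y | adj x y]|.

Fixpoint walk_length (R : numDomainType) (T : finType) (ell : {set T} -> R)
    (x : T) (p : seq T) : R :=
  if p is y :: q then ell [set x; y] + walk_length ell y q else 0.

Definition eucl_norm (R : rcfType) (n : nat) (v : 'rV[R]_n) : R :=
  Num.sqrt (\sum_(i < n) v ord0 i ^+ 2).

(* negative type: (T, sqrt d) embeds isometrically into a Hilbert space; since T is
   finite, the image spans a finite-dimensional subspace, i.e. some R^n. *)
Definition negative_type (R : rcfType) (T : finType) (d : T -> T -> R) : Prop :=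
  exists n (f : T -> 'rV[R]_n), forall x y, Num.sqrt (d x y) = eucl_norm (f x - f y).

Definition is_weighting (R : realType) (T : finType) (d : T -> T -> R) (w : T -> R) : Prop :=
  forall x, \sum_(y : T) expR (- d x y) * w y = 1.

Definition tanh (R : realType) (x : R) : R :=
  (expR x - expR (- x)) / (expR x + expR (- x)).

(* Main.v *)
Require Import Defs.
From HB Require Import structures.
From mathcomp Require Import all_boot all_order all_algebra.
From mathcomp Require Import reals sequences exp.
From mathcomp Require Import ring lra.
Import Order.TTheory GRing.Theory Num.Theory.
Local Open Scope ring_scope.
Set Implicit Arguments. Unset Strict Implicit. Unset Printing Implicit Defensive.

Section Tree.
Variables (R : realType) (T : finType) (adj : rel T)
    (ell : {set T} -> R) (d : T -> T -> R).
Hypothesis tree : is_tree adj.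
Hypothesis ellpos : forall x y, adj x y -> 0 < ell [set x; y].
Hypothesis dP : forall x y p, simple_path adj x p y -> d x y = walk_length ell x p.

Lemma irr x : ~~ adj x x. Proof. by case: tree => [[]]. Qed.
Lemma adjC x y : adj x y = adj y x. Proof. by case: tree => [[]]. Qed.
Lemma ellC x y : ell [set x; y] = ell [set y; x]. Proof. by rewrite setUC. Qed.
Lemma ellC1 x y : ell [set x; y] = ell [set y; x]. Proof. exact: ellC. Qed.
Lemma conn x y : exists p, simple_path adj x p y.
Proof. by case: tree => _ [[_ ]]. Qed.
Lemma acyc : ~ exists c : seq T, [&& (3 <= size c)%N, uniq c & cycle adj c].
Proof. by case: tree => _ []. Qed.

Lemma dxx x : d x x = 0.
Proof. by rewrite (dP (p := [::])) // /simple_path /= eqxx. Qed.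

Lemma adj_neq x y : adj x y -> x != y.
Proof. by move=> h; apply/eqP => e; move: h; rewrite e (negbTE (irr y)). Qed.

Lemma d_edge x y : adj x y -> d x y = ell [set x; y].
Proof.
move=> h; rewrite (dP (p := [:: y])) /= ?addr0 //.
by rewrite /simple_path /= h eqxx inE adj_neq.
Qed.

Lemma wl_ge0 x p : path adj x p -> 0 <= walk_length ell x p.
Proof.
elim: p x => [|y p IH] x //= /andP[h hp].
by rewrite addr_ge0 ?IH // ltW // ellpos.
Qed.

Lemma d_ge0 x y : 0 <= d x y.
Proof.
have [p hp] := conn x y; rewrite (dP hp); apply: wl_ge0.
by case/and3P: hp.
Qed.

Lemma toolA x z y0 q : simple_path adj x (y0 :: q) z ->
  [/\ adj x y0, d y0 z = d x z - ell [set x; y0] &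
      forall y, adj x y -> y != y0 -> d y z = d x z + ell [set x; y]].
Proof.
move=> hs.
have := hs; rewrite /simple_path /= => /and4P[/andP[hxy0 hq] hl hx /andP[hy0q hu]].
have hs' : simple_path adj y0 q z by rewrite /simple_path /= hq hl hy0q hu.
split => //.
  by rewrite (dP hs) (dP hs') /= addrC addKr.
move=> y hy hyy0.
have hsy : simple_path adj y (x :: y0 :: q) z.
  rewrite /simple_path /= adjC hy hxy0 hq hl /=. rewrite hx hy0q hu !andbT inE negb_or eq_sym (adj_neq hy) /=.
  apply/negP => hin; apply: acyc.
  have hin' : y \in q by move: hin; rewrite inE (negbTE hyy0).
  move: hu hy0q hq hx; case/splitPr: hin' => s1 s2 hu hy0q hq hx.
  exists [:: x, y0 & rcons s1 y].
  rewrite /= size_rcons ltnS ltnS ltn0Sn /=.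
  rewrite hxy0 rcons_path last_rcons adjC hy andbT.
  move: hq; rewrite cat_path /= => /and3P[hp1 ha _].
  rewrite -cats1 cat_path hp1 /= ha andbT cats1 rcons_uniq.
  move: hx hy0q hu; rewrite !inE !mem_cat !inE !negb_or cat_uniq /=.
  rewrite !mem_rcons !inE !negb_or andbT.
  move=> /and4P[-> -> -> _] /and3P[-> -> _] /and4P[-> H _ _].
  by case/andP: H => ->.
by rewrite (dP hsy) (dP hs) /= ellC addrC.
Qed.

Lemma toolB x z : x != z -> exists y0 q, simple_path adj x (y0 :: q) z.
Proof.
move=> hxz; have [[|y0 q] hp] := conn x z; last by exists y0, q.
by case/and3P: hp => _ /eqP /= e; rewrite e eqxx in hxz.
Qed.

Lemma adj_dist u v z : adj u v ->
  d v z = d u z + ell [set u; v] \/ d v z = d u z - ell [set u; v].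
Proof.
move=> huv; have [<-|huz] := eqVneq u z.
  by left; rewrite dxx add0r d_edge 1?adjC // ellC.
have [y0 [q hs]] := toolB huz; have [h1 h2 h3] := toolA hs.
have [->|hv] := eqVneq v y0; first by right.
by left; apply: h3.
Qed.

Lemma tri_path y p w : path adj y p ->
  d y w <= walk_length ell y p + d (last y p) w.
Proof.
elim: p y => [|a p IH] y /=; first by rewrite add0r.
case/andP=> hya hp; rewrite -addrA.
have h : d y w <= ell [set y; a] + d a w.
  have := ellpos hya; case: (adj_dist w hya) => ->; lra.
by apply: (le_trans h); rewrite lerD2l IH.
Qed.

Lemma tri x y z : d x z <= d x y + d y z.
Proof.
have [p hp] := conn x y; have := hp; case/and3P => hpa /eqP hl _.
have := tri_path z hpa; rewrite hl -(dP hp); done.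
Qed.

Lemma last_rev_belast (x : T) p z : last z (rev (belast x p)) = if p is [::] then z else x.
Proof. by case: p => [|a p] //=; rewrite rev_cons last_rcons. Qed.

Lemma wl_rcons x p z : walk_length ell x (rcons p z) = walk_length ell x p + ell [set last x p; z].
Proof. by elim: p x => [|a p IH] x /=; rewrite ?addr0 ?add0r // IH addrA. Qed.

Lemma wl_rev x p : walk_length ell x p = walk_length ell (last x p) (rev (belast x p)).
Proof.
elim: p x => [|a p IH] x //=.
rewrite rev_cons wl_rcons last_rev_belast IH.
case: p {IH} => [|b p] /=; first by rewrite addr0 add0r ellC.
by rewrite addrC ellC.
Qed.

Lemma d_sym x y : d y x = d x y.
Proof.
have [p hp] := conn x y; have := hp; case/and3P => hpa /eqP hl hu.
rewrite (dP hp) wl_rev hl; apply: dP.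
rewrite /simple_path; apply/and3P; split.
- rewrite -hl rev_path; apply: sub_path hpa => a b; by rewrite adjC.
- by rewrite last_rev_belast; case: p {hp hpa hu} hl => [/= ->|].
- by rewrite -hl -rev_rcons -lastI rev_uniq.
Qed.


Section Root.
Variable r : T.

Definition D x := d x r.
Definition par x := if x == r then r else odflt r [pick y | adj x y && (D y < D x)].

Lemma par_spec x : x != r -> [/\ adj x (par x), D (par x) = D x - ell [set x; par x] &
   forall y, adj x y -> y != par x -> D y = D x + ell [set x; y]].
Proof.
move=> hx; have [y0 [q hs]] := toolB hx; have [h1 h2 h3] := toolA hs.
suff -> : par x = y0 by [].
rewrite /par (negbTE hx); case: pickP => [y /andP[hy hlt] | none] /=.
  apply/eqP; apply: contraTT hlt => hne; rewrite /D (h3 _ hy hne) -leNgt.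
  by rewrite lerDl ltW // ellpos.
exfalso; have := ellpos h1; move: (none y0); rewrite h1 /= /D h2 => /negbT.
rewrite -leNgt; lra.
Qed.

Lemma D_r : D r = 0. Proof. exact: dxx. Qed.
Lemma D_ge0 x : 0 <= D x. Proof. exact: d_ge0. Qed.
Lemma par_r : par r = r. Proof. by rewrite /par eqxx. Qed.
Lemma par_lt x : x != r -> D (par x) < D x.
Proof.
move=> hx; have [h1 h2 _] := par_spec hx; have := ellpos h1; rewrite h2; lra.
Qed.
Lemma par_le x : D (par x) <= D x.
Proof. by have [->|hx] := eqVneq x r; rewrite ?par_r // ltW // par_lt. Qed.

Lemma child x w : adj x w -> w != par x -> w != r /\ par w = x.
Proof.
move=> hxw hwp.
have hD : D w = D x + ell [set x; w].
  have [e|hx] := eqVneq x r.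
    rewrite e /D dxx add0r d_edge; first exact: ellC.
    by rewrite -e adjC.
  by have [_ _ h] := par_spec hx; apply: h.
have hwr : w != r.
  apply/eqP => e; have := ellpos hxw; have := D_ge0 x.
  by move: hD; rewrite e D_r; lra.
split => //; have [h1 h2 h3] := par_spec hwr.
apply/eqP; apply: contraT => hne.
have hxw' : adj w x by rewrite adjC.
have hne' : x != par w by rewrite eq_sym.
have := h3 x hxw' hne'.
have := ellpos hxw; rewrite hD ellC; lra.
Qed.

Lemma par_ind (P : T -> Prop) : P r -> (forall x, x != r -> P (par x) -> P x) -> forall x, P x.
Proof.
move=> h0 hS x.
have [n] := ubnP #|[set y | D y < D x]|; elim: n x => // n IH x hn.
have [->|hx] := eqVneq x r; first done.
apply: (hS x hx); apply: IH; rewrite -ltnS; apply: leq_trans hn.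
rewrite ltnS; apply: proper_card; apply/properP; split.
  apply/subsetP => y; rewrite !inE => h; apply: lt_le_trans h (par_le x).
by exists (par x); rewrite !inE ?ltxx // par_lt.
Qed.


Lemma fcon_step y z : fconnect par y z = (z == y) || fconnect par (par y) z.
Proof.
apply/idP/idP.
  move/iter_findex => <-; case: findex => [|k]; first by rewrite /= eqxx.
  by rewrite iterSr fconnect_iter orbT.
case/orP => [/eqP -> | h]; first exact: connect0.
exact: connect_trans (fconnect1 _ _) h.
Qed.

Lemma fcon_r z : fconnect par r z -> z = r.
Proof. by move/iter_findex => <-; elim: findex => //= k ->; rewrite par_r. Qed.

Lemma anc_dist y z : fconnect par y z -> d y z = D y - D z.
Proof.
move: z; elim/par_ind: y => [|y hy IH] z.
  by move/fcon_r ->; rewrite dxx /D dxx subrr.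
rewrite fcon_step => /orP [/eqP -> | h]; first by rewrite dxx subrr.
have e := IH z h; have [hadj hDp _] := par_spec hy.
have := ellpos hadj; have := tri y z r.
rewrite /D in e hDp *.
by case: (adj_dist z hadj) => h2; lra.
Qed.

Lemma chain vs a b : path adj a (b :: vs) -> uniq (a :: b :: vs) -> b != par a ->
  fconnect par (last b vs) a.
Proof.
elim: vs a b => [|c vs IH] a b /=.
  move=> /andP[hab _] _ hb; have [_ e] := child hab hb.
  by rewrite -e; apply: fconnect1.
move=> /and3P[hab hbc hp] /andP[ha /andP[hb hu]] hbn; have [_ e] := child hab hbn.
apply: connect_trans (IH b c _ _ _) _.
- by rewrite /= hbc.
- by rewrite /= hb.
- rewrite e; apply: contraNneq ha => ->; by rewrite !inE eqxx orbT.
- by rewrite -e; apply: fconnect1.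
Qed.

Definition A y := [set z | fconnect par y z & z != r].

Lemma A_r : A r = set0.
Proof. by apply/setP => z; rewrite !inE; apply/negbTE/negP => /andP[/fcon_r ->]; rewrite eqxx. Qed.

Lemma A_step y : y != r -> A y = y |: A (par y).
Proof.
move=> hy; apply/setP => z; rewrite !inE fcon_step.
by have [->|hz] := eqVneq z y; rewrite ?hy.
Qed.

Lemma notA_par y : y != r -> y \notin A (par y).
Proof.
move=> hy; rewrite inE; apply/negP => /andP[h _]; have := anc_dist h.
have := d_ge0 (par y) y; have := par_lt hy; rewrite /D; lra.
Qed.

Lemma key x y : x != r -> d (par x) y =
  if x \in A y then d x y + ell [set x; par x] else d x y - ell [set x; par x].
Proof.
move=> hx; have [hadj hDp _] := par_spec hx.
case: ifP => hA.
  move: hA; rewrite inE => /andP[h _].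
  have h1 := anc_dist h; have h2 := anc_dist (connect_trans h (fconnect1 _ _)).
  rewrite d_sym in h1; rewrite d_sym in h2; rewrite h1 h2 hDp; lra.
have [e|hxy] := eqVneq x y.
  by move: hA; rewrite e inE connect0 -e hx.
have [y0 [q hs]] := toolB hxy; have [h1 h2 h3] := toolA hs.
have [<-|hne] := eqVneq y0 (par x); first by [].
exfalso; move: hA; rewrite inE hx andbT.
case/and3P: hs => hp /eqP hl hu.
by have := chain hp hu hne; rewrite /= in hl; rewrite hl => ->.
Qed.


Definition c v := ell [set v; par v].
Definition g x v := if v \in A x then Num.sqrt (c v) else 0.
Definition S x y := \sum_v (g x v - g y v) ^+ 2.

Lemma c_pos v : v != r -> 0 < c v.
Proof. by move=> hv; have [h _ _] := par_spec hv; apply: ellpos. Qed.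

Lemma inA_r v y : v \in A y -> v != r.
Proof. by rewrite inE => /andP[]. Qed.

Lemma gsq y : \sum_v g y v ^+ 2 = \sum_(v in A y) c v.
Proof.
rewrite [RHS]big_mkcond; apply: eq_bigr => v _; rewrite /g; case: ifP => h.
  by rewrite sqr_sqrtr // ltW // c_pos // (inA_r h).
by rewrite expr0n.
Qed.

Lemma base y : D y = \sum_(v in A y) c v.
Proof.
elim/par_ind: y => [|y hy IH]; first by rewrite A_r big_set0 D_r.
rewrite A_step // big_setU1 ?notA_par //= -IH.
have [_ h _] := par_spec hy; rewrite h /c; lra.
Qed.

Lemma main x y : d x y = S x y.
Proof.
move: y; elim/par_ind: x => [|x hx IH] y.
  rewrite /S; under eq_bigr do rewrite {1}/g A_r in_set0 sub0r sqrrN.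
  by rewrite gsq -base /D d_sym.
have e1 : S x y = (g x x - g y x) ^+ 2 + \sum_(v | v != x) (g (par x) v - g y v) ^+ 2.
  rewrite /S (bigD1 x) //=; congr (_ + _); apply: eq_bigr => v hv.
  by rewrite {1 2}/g A_step // in_setU1 (negbTE hv).
have e2 : S (par x) y = (g y x) ^+ 2 + \sum_(v | v != x) (g (par x) v - g y v) ^+ 2.
  rewrite /S (bigD1 x) //=; congr (_ + _).
  by rewrite {1}/g (negbTE (notA_par hx)) sub0r sqrrN.
have gx : g x x = Num.sqrt (c x) by rewrite /g A_step // setU11.
have hc := c_pos hx; have hs := sqr_sqrtr (ltW hc).
have := key y hx; rewrite IH e2 e1 gx.
case: ifP => hA; rewrite /g hA ?subrr ?expr0n ?subr0 /= hs -/(c x); lra.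
Qed.


Lemma negtype : negative_type d.
Proof.
exists #|T|, (fun x => \row_(i < #|T|) g x (enum_val i)).
move=> x y; rewrite /eucl_norm main /S; congr Num.sqrt.
rewrite (big_enum_val (A := T) (fun v => (g x v - g y v) ^+ 2)).
by apply: eq_bigr => i _; rewrite !mxE.
Qed.

End Root.

Definition q x y := expR (- ell [set x; y]).
Definition Zf y z := expR (- d y z).
Definition Kd x := 1 + \sum_(y | adj x y) q x y ^+ 2 / (1 - q x y ^+ 2).
Definition M x z := (if x == z then Kd x else 0) - (if adj x z then q x z / (1 - q x z ^+ 2) else 0).

Lemma q_bounds x y : adj x y -> 0 < q x y /\ q x y < 1.
Proof.
move=> h; have hl := ellpos h; split; first exact: expR_gt0.
rewrite /q expRN invf_lt1 ?expR_gt0 //.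
have := expR_gt1Dx (lt0r_neq0 hl); lra.
Qed.

Lemma MZ x z : \sum_y M x y * Zf y z = (x == z)%:R.
Proof.
under eq_bigr do rewrite mulrBl; rewrite sumrB.
have s1 : \sum_y (if x == y then Kd x else 0) * Zf y z = Kd x * Zf x z.
  rewrite (bigD1 x) //= eqxx big1 ?addr0 // => y hy.
  by rewrite eq_sym (negbTE hy) mul0r.
have s2 : \sum_y (if adj x y then q x y / (1 - q x y ^+ 2) else 0) * Zf y z =
    \sum_(y | adj x y) q x y / (1 - q x y ^+ 2) * Zf y z.
  by rewrite [RHS]big_mkcond; apply: eq_bigr => y _; case: ifP => _; rewrite ?mul0r.
rewrite s1 s2 {s1 s2}.
have [<-|hxz] := eqVneq x z.
  rewrite /Zf dxx oppr0 expR0 mulr1 /Kd.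
  have -> : \sum_(y | adj x y) q x y / (1 - q x y ^+ 2) * expR (- d y x) =
            \sum_(y | adj x y) q x y ^+ 2 / (1 - q x y ^+ 2).
    apply: eq_bigr => y hy; rewrite d_edge 1?adjC // ellC -/(q x y).
    by rewrite mulrAC expr2.
  by rewrite addrK.

have [y0 [p hs]] := toolB hxz; have [h1 h2 h3] := toolA hs.
rewrite /Kd (bigD1 y0) //= (bigD1 y0 h1) /=.
have -> : \sum_(y | adj x y && (y != y0)) q x y / (1 - q x y ^+ 2) * Zf y z =
          (\sum_(y | adj x y && (y != y0)) q x y ^+ 2 / (1 - q x y ^+ 2)) * Zf x z.
  rewrite mulr_suml; apply: eq_bigr => y /andP[hy hne].
  rewrite /Zf (h3 _ hy hne) opprD expRD -/(q x y); rewrite expr2; field.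
  have [hq0 hq1] := q_bounds hy.
  rewrite subr_eq0 eq_sym; apply/negP => /eqP e.
  nra.
have -> : Zf y0 z = Zf x z / q x y0.
  by rewrite /Zf h2 opprB /q [expR (- ell _)]expRN invrK -expRD addrC.
have [hq0 hq1] := q_bounds h1.
have hne : 1 - q x y0 ^+ 2 != 0.
  rewrite subr_eq0 eq_sym expr2; apply/negP => /eqP e.
  nra.
field; rewrite hne lt0r_neq0 //.
Qed.


Lemma ZM x z : \sum_y Zf x y * M y z = (x == z)%:R.
Proof.
set Mm := \matrix_(i < #|T|, j < #|T|) M (enum_val i) (enum_val j).
set Zm := \matrix_(i < #|T|, j < #|T|) Zf (enum_val i) (enum_val j).
have h : Mm *m Zm = 1%:M.
  apply/matrixP => i j; rewrite !mxE.
  under eq_bigr do rewrite !mxE.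
  rewrite -(big_enum_val (A := T) (fun y => M (enum_val i) y * Zf y (enum_val j))).
  by rewrite MZ (inj_eq enum_val_inj).
have e : (Zm *m Mm) (enum_rank x) (enum_rank z) = (1%:M : 'M[R]_#|T|) (enum_rank x) (enum_rank z).
  by rewrite (mulmx1C h).
rewrite !mxE (inj_eq enum_rank_inj) in e.
rewrite -e (big_enum_val (A := T) (fun y => Zf x y * M y z)).
by apply: eq_bigr => i _; rewrite !mxE !enum_rankK.
Qed.

Definition w0 x := \sum_z M x z.

Lemma sum_delta (F : T -> R) x : \sum_y (x == y)%:R * F y = F x.
Proof.
rewrite (bigD1 x) //= eqxx mul1r big1 ?addr0 // => y hy.
by rewrite eq_sym (negbTE hy) mul0r.
Qed.

Lemma w0_weight : is_weighting d w0.
Proof.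
move=> x; rewrite /w0.
under eq_bigr do rewrite mulr_sumr; rewrite exchange_big /=.
have -> : \sum_j \sum_i expR (- d x i) * M i j = \sum_j (x == j)%:R * 1.
  by apply: eq_bigr => j _; rewrite mulr1 -ZM.
by rewrite sum_delta.
Qed.

Lemma weight_uniq w : is_weighting d w -> forall x, w x = w0 x.
Proof.
move=> hw x; rewrite /w0.
have -> : \sum_z M x z = \sum_z M x z * \sum_y Zf z y * w y.
  by apply: eq_bigr => z _; rewrite /Zf hw mulr1.
under eq_bigr do rewrite mulr_sumr; rewrite exchange_big /=.
have -> : \sum_j \sum_i M x i * (Zf i j * w j) = \sum_j (x == j)%:R * w j.
  by apply: eq_bigr => j _; rewrite -MZ mulr_suml; apply: eq_bigr => i _; rewrite mulrA.
by rewrite sum_delta.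
Qed.

Lemma deg_sum x : (deg adj x)%:R = \sum_(y | adj x y) (1 : R).
Proof.
rewrite /deg -sum1_card natr_sum; apply: eq_bigl => y; by rewrite inE.
Qed.

Lemma w0_formula x : w0 x = 1 + \sum_(y | adj x y) ((1 + q x y)^-1 - 1).
Proof.
rewrite /w0 /M sumrB.
have -> : \sum_z (if x == z then Kd x else 0) = Kd x.
  rewrite (bigD1 x) //= eqxx big1 ?addr0 // => y hy; by rewrite eq_sym (negbTE hy).
rewrite -big_mkcond /Kd -addrA; congr (_ + _); rewrite -sumrB; apply: eq_bigr => y hy.
have [h0 h1] := q_bounds hy.
have h2 : 1 - q x y ^+ 2 != 0 by rewrite subr_eq0 eq_sym expr2; apply/negP => /eqP e; nra.
have h3 : 1 + q x y != 0 by apply/negP => /eqP e; nra.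
by field; rewrite h2 h3.
Qed.

Lemma w0_formula' x : w0 x = \sum_(y | adj x y) (1 + expR (- ell [set x; y]))^-1 - ((deg adj x)%:R - 1).
Proof.
rewrite w0_formula deg_sum sumrB /q; lra.
Qed.


Section Root2.
Variable r : T.
Local Notation par := (par r).

Definition P1 x y := (x != r) && (y == par x).
Definition P2 x y := (y != r) && (par y == x).

Lemma adj_split x y : adj x y = P1 x y || P2 x y.
Proof.
rewrite /P1 /P2; apply/idP/idP.
  move=> hxy; have [e|hne] := eqVneq y (par x).
    have [hx|hx] := eqVneq x r; last by [].
    by move: hxy; rewrite e hx par_r (negbTE (irr r)).
  by have [hy e] := child hxy hne; rewrite hy e eqxx orbT.
case/orP => /andP[hx /eqP e].
  by rewrite e; have [] := par_spec hx.
by rewrite -e; have [h _ _] := par_spec hx; rewrite adjC.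
Qed.

Lemma P_excl x y : P1 x y -> P2 x y -> False.
Proof.
rewrite /P1 /P2 => /andP[hx /eqP e1] /andP[hy /eqP e2].
have := par_lt hx; have := par_lt hy; rewrite -e1 e2; lra.
Qed.

Lemma qC x y : q x y = q y x. Proof. by rewrite /q ellC. Qed.

Lemma ordered_sum (H : T -> T -> R) : (forall x y, H x y = H y x) ->
  \sum_x \sum_(y | adj x y) H x y = 2 * \sum_(x | x != r) H x (par x).
Proof.
move=> hH.
have e1 : forall x, \sum_(y | adj x y) H x y =
    \sum_(y | P1 x y) H x y + \sum_(y | P2 x y) H x y.
  move=> x; rewrite [LHS]big_mkcond [X in _ = X + _]big_mkcond [X in _ = _ + X]big_mkcond -big_split; apply: eq_bigr => y _.
  rewrite adj_split; case h1: (P1 x y); case h2: (P2 x y) => //=; rewrite ?addr0 ?add0r //.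
  by case: (P_excl h1 h2).
under eq_bigr do rewrite e1; rewrite big_split /=.
have e2 : \sum_x \sum_(y | P1 x y) H x y = \sum_(x | x != r) H x (par x).
  rewrite [RHS]big_mkcond; apply: eq_bigr => x _; case: ifP => hx.
    by apply: big_pred1 => y; rewrite /P1 hx.
  by apply: big_pred0 => y; rewrite /P1 hx.
have e3 : \sum_x \sum_(y | P2 x y) H x y = \sum_(x | x != r) H x (par x).
  rewrite (exchange_big_dep (fun y => y != r)) /=; last by move=> i j _ /andP[].
  apply: eq_bigr => y hy; rewrite hH; apply: big_pred1 => x.
  by rewrite /P2 hy eq_sym.
by rewrite e2 e3 mulr2n mulrDl mul1r.
Qed.

Lemma edges_eq : edges adj = [set [set x; par x] | x in [set x | x != r]].
Proof.
apply/setP => e; apply/idP/idP.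
  case/imset2P => a b _; rewrite inE => hab ->.
  move: hab; rewrite adj_split => /orP[] /andP[h /eqP he].
    by apply/imsetP; exists a; rewrite ?inE ?he.
  by apply/imsetP; exists b; rewrite ?inE // -he setUC.
case/imsetP => x; rewrite inE => hx ->.
have [h _ _] := par_spec hx.
by apply/imset2P; exists x (par x); rewrite ?inE.
Qed.

Lemma edge_inj : {in [set x | x != r] &, injective (fun x => [set x; par x])}.
Proof.
move=> x y; rewrite !inE => hx hy e.
apply/eqP; apply: contraT => hne.
have : x \in [set y; par y] by rewrite -e set21.
have : y \in [set x; par x] by rewrite e set21.
rewrite !inE (negbTE hne) eq_sym (negbTE hne) /= => /eqP e1 /eqP e2.
have := par_lt hx; have := par_lt hy; rewrite -e1 -e2; lra.
Qed.

Lemma tanh_half (a : R) : tanh (a / 2) = 2 / (1 + expR (- a)) - 1.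
Proof.
rewrite /tanh.
have -> : - a = - (a / 2) + - (a / 2) by field.
rewrite expRD !expRN.
have hu := expR_gt0 (a / 2).
set u := expR (a / 2).
have h1 : u + u^-1 != 0 by apply/lt0r_neq0; rewrite addr_gt0 // invr_gt0.
have h2 : 1 + u^-1 * u^-1 != 0 by apply/lt0r_neq0; rewrite addr_gt0 // mulr_gt0 // invr_gt0.
by field; rewrite lt0r_neq0 //= lt0r_neq0 // addr_gt0 // mulr_gt0.
Qed.

Lemma magn : \sum_x w0 x = 1 + \sum_(e in edges adj) tanh (ell e / 2).
Proof.
under eq_bigr do rewrite w0_formula; rewrite big_split /=.
rewrite (@ordered_sum (fun x y => (1 + q x y)^-1 - 1)); last by move=> x y; rewrite qC.
rewrite edges_eq big_imset /=; last exact: edge_inj.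
have -> : \sum_(i in [set x | x != r]) tanh (ell [set i; par i] / 2) =
    \sum_(x | x != r) tanh (ell [set x; par x] / 2) by apply: eq_bigl => x; rewrite inE.
rewrite (bigD1 r) //= -addrA; congr (_ + _).
rewrite mulr_sumr -big_split /=; apply: eq_bigr => x hx.
rewrite tanh_half /q; field.
have [h _ _] := par_spec hx; have [h0 h1] := q_bounds h.
by rewrite /q in h0; apply/lt0r_neq0; rewrite addr_gt0.
Qed.

End Root2.
End Tree.

Theorem proposition3p2 (R : realType) (T : finType) (adj : rel T)
    (ell : {set T} -> R) (d : T -> T -> R) :
  is_tree adj ->
  (forall x y, adj x y -> 0 < ell [set x; y]) ->
  (forall x y p, simple_path adj x p y -> d x y = walk_length ell x p) ->
  negative_type d /\
  (forall w : T -> R, is_weighting d w <->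
     (forall x, w x = \sum_(y | adj x y) (1 + expR (- ell [set x; y]))^-1
                      - ((deg adj x)%:R - 1))) /\
  (forall w : T -> R, is_weighting d w ->
     \sum_(x : T) w x = 1 + \sum_(e in edges adj) tanh (ell e / 2)).
Proof.
move=> tree ellpos dP.
have [r _] : exists r : T, true.
  by case: tree => _ [[/card_gt0P [x _] _] _]; exists x.
split; first exact: (negtype tree ellpos dP r).
split.
  move=> w; split.
    move=> hw x; rewrite (weight_uniq tree ellpos dP hw).
    exact: (w0_formula' ellpos).
  move=> hw.
  have e : forall x, w x = w0 adj ell x.
    by move=> x; rewrite hw (w0_formula' ellpos).
  move=> x; under eq_bigr do rewrite e; exact: (w0_weight tree ellpos dP).
move=> w hw.
under eq_bigr do rewrite (weight_uniq tree ellpos dP hw).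
exact: (magn tree ellpos dP r).
Qed.
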